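(* Let $\mathcal{S}$ be a finite generalized quadrangle of order $s$ with $s$ even and $s\ge 4$, and let $G$ be a group of automorphisms of $\mathcal{S}$ acting regularly on the points. Then $|G/G'|$ divides either $1+s$ or $1+s^2$.
   Context: A generalized quadrangle of order $s$: each line has $s+1$ points, each point is on $s+1$ lines, and for each non-incident point-line pair $(P,\ell)$ there is a unique point on $\ell$ collinear with $P$. $G'$ is the derived subgroup of $G$. *)

(* Defs.v *)
From mathcomp Require Import all_boot fingroup action quotient commutator.
Local Open Scope group_scope.
Set Implicit Arguments. Unset Strict Implicit. Unset Printing Implicit Defensive.

Definition collinear (P L : finType) (I : P -> L -> bool) (x y : P) : Prop :=
  exists m : L, I x m && I y m.

Definition is_GQ (P L : finType) (I : P -> L -> bool) (s : nat) : Prop :=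
  [/\ (forall l : L, #|[set x | I x l]| = s.+1),
      (forall x : P, #|[set l | I x l]| = s.+1),
      (forall (x y : P) (l m : L), x != y -> I x l -> I y l -> I x m -> I y m -> l = m)
    & (forall (x : P) (l : L), ~~ I x l ->
         exists! y : P, I y l /\ collinear I x y)].

Definition acts_by_automorphisms (gT : finGroupType) (G : {group gT})
    (P L : finType) (I : P -> L -> bool)
    (toP : {action gT &-> P}) (toL : {action gT &-> L}) : Prop :=
  forall g, g \in G -> forall (x : P) (l : L), I (toP x g) (toL l g) = I x l.

Definition regular_on_points (gT : finGroupType) (G : {group gT})
    (P : finType) (toP : {action gT &-> P}) : Prop :=
  [transitive G, on [set: P] | toP] /\ (forall x : P, 'C_G[x | toP] = 1%g).

(* Main.v *)
Require Import Defs.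
From mathcomp Require Import all_boot fingroup action quotient commutator.
From mathcomp Require Import all_algebra all_fingroup all_solvable all_field all_character.
From mathcomp Require Import zify.
Set Implicit Arguments. Unset Strict Implicit. Unset Printing Implicit Defensive.
Import GRing.Theory Num.Theory.

(* Proof sketch: the collinearity graph gives |N[x] cap N[y]| = s+1 + [x=y] s^2;
   for a linear character phi of G, S(phi) = sum_{g in D} phi g satisfies
   S(phi)^2 = (s+1) sum_G phi + s^2, so S(phi) = +-s for phi <> 1.
   Frobenius congruences in algebraic integers then rule out linear
   characters of order p*q with p | s+1 and q | s^2+1. *)

Definition colb (P L : finType) (I : P -> L -> bool) (x y : P) :=
  [exists l, I x l && I y l].

Lemma colbP (P L : finType) (I : P -> L -> bool) x y :
  reflect (collinear I x y) (colb I x y).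
Proof. exact: existsP. Qed.

Lemma colbC (P L : finType) (I : P -> L -> bool) x y : colb I x y = colb I y x.
Proof. by apply/existsP/existsP => -[l /andP[a b]]; exists l; rewrite a b. Qed.

Lemma card_sum (T : finType) (p : pred T) : #|[set b | p b]| = \sum_b (p b : nat).
Proof.
rewrite -sum1_card big_mkcond /=; apply: eq_bigr => b _; rewrite inE; by case: (p b).
Qed.

Lemma dcount (T1 T2 : finType) (R : T1 -> T2 -> bool) :
  \sum_a #|[set b | R a b]| = \sum_b #|[set a | R a b]|.
Proof.
rewrite (eq_bigr (fun a => \sum_b (R a b : nat))); last by move=> a _; rewrite card_sum.
rewrite exchange_big /=; apply: eq_bigr => b _; by rewrite card_sum.
Qed.

Section GQcount.
Variables (P L : finType) (I : P -> L -> bool) (s : nat).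
Hypothesis hGQ : is_GQ I s.

Lemma one_line x z l0 : x != z -> I x l0 -> I z l0 ->
  [set l | I x l && I z l] = [set l0].
Proof.
case: hGQ => _ _ plin _ xz xl zl; apply/setP => l; rewrite !inE.
apply/idP/eqP => [/andP[a b] | ->]; last by rewrite xl zl.
exact: (plin x z l l0).
Qed.

Lemma card_self x : #|[set z | colb I x z]| = s.+1 + s ^ 2.
Proof.
case: hGQ => hl hp plin ax.
pose R z l := I x l && I z l && (z != x).
have H1 := dcount R.
have E1 : forall z, #|[set l | R z l]| = (colb I x z && (z != x) : nat).
  move=> z; case: (boolP (z != x)) => zx; last first.
    rewrite andbF; apply/eqP; rewrite cards_eq0; apply/eqP/setP => l.
    by rewrite !inE /R /= (negbTE zx) andbF.
  rewrite andbT.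
  have -> : [set l | R z l] = [set l | I x l && I z l].
    by apply/setP => l; rewrite !inE /R /= zx andbT.
  case: (boolP (colb I x z)) => [/existsP[l0 /andP[a b]] | nc].
    by rewrite (one_line _ a b) ?cards1 // eq_sym.
  apply/eqP; rewrite cards_eq0; apply/eqP/setP => l; rewrite !inE.
  by apply/negP => /andP[a b]; case/negP: nc; apply/existsP; exists l; rewrite a b.
have E2 : forall l, #|[set z | R z l]| = (I x l : nat) * s.
  move=> l; case: (boolP (I x l)) => xl /=; last first.
    by apply/eqP; rewrite cards_eq0; apply/eqP/setP => z; rewrite !inE /R /= (negbTE xl).
  rewrite mul1n.
  have -> : [set z | R z l] = [set z | I z l] :\ x.
    by apply/setP => z; rewrite !inE /R /= xl andbC.
  by move: (cardsD1 x [set z | I z l]); rewrite hl inE xl add1n => -[].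
rewrite (eq_bigr _ (fun z _ => E1 z)) (eq_bigr _ (fun l _ => E2 l)) in H1.
rewrite -big_distrl /= -(card_sum (fun i => colb I x i && (i != x))) -(card_sum (fun l => I x l)) hp in H1.
have xin : x \in [set z | colb I x z].
  rewrite inE; have : 0 < #|[set l | I x l]| by rewrite hp.
  by case/card_gt0P => l; rewrite inE => xl; apply/existsP; exists l; rewrite xl.
rewrite (cardsD1 x) xin.
have -> : [set z | colb I x z] :\ x = [set z | colb I x z && (z != x)].
  by apply/setP => z; rewrite !inE andbC.
rewrite H1; rewrite add1n mulnC; nia.
Qed.


Lemma card_col x y : x != y -> colb I x y ->
  #|[set z | colb I x z && colb I y z]| = s.+1.
Proof.
case: hGQ => hl hp plin ax xy /existsP[l0 /andP[xl yl]].
have -> : [set z | colb I x z && colb I y z] = [set z | I z l0].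
  apply/setP => z; rewrite !inE; apply/idP/idP => [/andP[cx cy] | zl].
    apply/negPn/negP => nzl.
    have [w [[wl _] wu]] := ax z l0 nzl.
    have ex : w = x by apply: wu; split => //; apply/colbP; rewrite colbC.
    have ey : w = y by apply: wu; split => //; apply/colbP; rewrite colbC.
    by case/eqP: xy; rewrite -ex -ey.
  by apply/andP; split; apply/existsP; exists l0; rewrite ?xl ?yl zl.
exact: hl.
Qed.

Lemma card_ncol x y : ~~ colb I x y ->
  #|[set z | colb I x z && colb I y z]| = s.+1.
Proof.
case: hGQ => hl hp plin ax nxy.
pose R z l := I x l && I z l && colb I y z.
have H1 := dcount R.
have E1 : forall z, #|[set l | R z l]| = (colb I x z && colb I y z : nat).
  move=> z; case: (boolP (colb I y z)) => cy; last first.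
    rewrite andbF; apply/eqP; rewrite cards_eq0; apply/eqP/setP => l.
    by rewrite !inE /R /= (negbTE cy) andbF.
  rewrite andbT.
  have -> : [set l | R z l] = [set l | I x l && I z l].
    by apply/setP => l; rewrite !inE /R /= cy andbT.
  case: (boolP (colb I x z)) => [/existsP[l0 /andP[a b]] | nc].
    rewrite (one_line _ a b) ?cards1 //.
    by apply/eqP => exz; case/negP: nxy; rewrite exz colbC.
  apply/eqP; rewrite cards_eq0; apply/eqP/setP => l; rewrite !inE.
  by apply/negP => /andP[a b]; case/negP: nc; apply/existsP; exists l; rewrite a b.
have E2 : forall l, #|[set z | R z l]| = (I x l : nat).
  move=> l; case: (boolP (I x l)) => xl /=; last first.
    by apply/eqP; rewrite cards_eq0; apply/eqP/setP => z; rewrite !inE /R /= (negbTE xl).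
  have nyl : ~~ I y l.
    by apply/negP => yl; case/negP: nxy; apply/existsP; exists l; rewrite xl yl.
  have [w [[wl cw] wu]] := ax y l nyl.
  have -> : [set z | R z l] = [set w].
    apply/setP => z; rewrite !inE /R /= xl /=; apply/idP/eqP => [/andP[zl cz] | ->].
      by apply/esym/wu; split => //; apply/colbP.
    by rewrite wl; apply/colbP.
  by rewrite cards1.
rewrite (eq_bigr _ (fun z _ => E1 z)) (eq_bigr _ (fun l _ => E2 l)) in H1.
rewrite -(card_sum (fun i => colb I x i && colb I y i)) -(card_sum (fun l => I x l)) hp in H1.
exact: H1.
Qed.

Lemma common_nbrs x y :
  #|[set z | colb I x z && colb I y z]| = s.+1 + (x == y) * s ^ 2.
Proof.
case: (eqVneq x y) => [<- | xy].
  rewrite mul1n -(card_self x); apply: eq_card => z; by rewrite !inE andbb.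
rewrite mul0n addn0; case: (boolP (colb I x y)) => c; first exact: card_col.
exact: card_ncol.
Qed.

End GQcount.


Section GroupPart.
Local Open Scope group_scope.
Variables (P L : finType) (I : P -> L -> bool) (s : nat).
Hypothesis hGQ : is_GQ I s.
Variables (gT : finGroupType) (G : {group gT}).
Variables (toP : {action gT &-> P}) (toL : {action gT &-> L}).
Hypothesis haut : acts_by_automorphisms G I toP toL.
Hypothesis hreg : regular_on_points G toP.
Variable x0 : P.

Lemma col_act g x y : g \in G -> colb I (toP x g) (toP y g) = colb I x y.
Proof.
move=> Gg; apply/existsP/existsP => -[l /andP[a b]].
  exists (toL l g^-1).
  by rewrite -(haut Gg) -(haut Gg y) actKV a b.
by exists (toL l g); rewrite !haut ?a ?b.
Qed.

Lemma orbit_all : orbit toP G x0 = [set: P].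
Proof. by case: hreg => tr _; apply: (atransP tr); rewrite inE. Qed.

Lemma orb_inj : {in G &, injective (toP x0)}.
Proof.
move=> g h Gg Gh e.
have : g * h^-1 \in 'C_G[x0 | toP].
  rewrite inE groupM ?groupV //=; apply/astab1P.
  by rewrite actM e actK.
by case: hreg => _ ->; move/set1gP/eqP; rewrite -eq_mulgV1 => /eqP.
Qed.

Lemma orb_surj z : exists2 g, g \in G & z = toP x0 g.
Proof.
have : z \in orbit toP G x0 by rewrite orbit_all inE.
by case/orbitP => g Gg <-; exists g.
Qed.

Lemma fix_eq1 u : u \in G -> (toP x0 u == x0) = (u == 1).
Proof.
move=> Gu; apply/eqP/eqP => [e | ->]; last by rewrite act1.
by apply: orb_inj; rewrite ?group1 // act1.
Qed.

Definition Dset := [set g in G | colb I x0 (toP x0 g)].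

Lemma NU u : u \in G ->
  #|[set g in Dset | g * u \in Dset]| = s.+1 + (u == 1) * s ^ 2.
Proof.
move=> Gu.
have Gu' : u^-1 \in G by rewrite groupV.
rewrite -(card_in_imset (f := toP x0)); last first.
  by move=> g h; rewrite !inE => /andP[/andP[Gg _] _] /andP[/andP[Gh _] _]; apply: orb_inj.
rewrite -invg_eq1 -(fix_eq1 Gu') eq_sym -(common_nbrs hGQ x0 (toP x0 u^-1)).
apply: eq_card => z; rewrite inE.
apply/imsetP/idP => [[g] | /andP[c1 c2]].
  rewrite !inE => /andP[/andP[Gg cg] /andP[Ggu cgu]] ->.
  rewrite -(col_act _ _ Gu') -actM mulgK in cgu.
  by rewrite cg cgu.
have [g Gg ez] := orb_surj z.
exists g => //; rewrite !inE Gg groupM //= -ez c1 /=.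
by rewrite -(col_act _ _ Gu') -actM mulgK -ez.
Qed.

Lemma Dsym g : (g^-1 \in Dset) = (g \in Dset).
Proof.
rewrite !inE groupV; case: (boolP (g \in G)) => //= Gg.
by rewrite -(col_act _ _ Gg) -actM mulVg act1 colbC.
Qed.

Lemma DsubG : Dset \subset G.
Proof. by apply/subsetP => g; rewrite inE => /andP[]. Qed.

End GroupPart.

Section FrobPart.
Local Open Scope ring_scope.

Lemma frob2 r (x y : algC) : prime r -> x \in Aint -> y \in Aint ->
  ((x + y) ^+ r == x ^+ r + y ^+ r %[mod r%:R])%A.
Proof.
move=> pr Ax Ay.
have r_gt0 := prime_gt0 pr.
rewrite exprDn big_ord_recl /= subn0 expr0 mulr1 bin0 mulr1n.
rewrite eqAmodDl.
case: r pr r_gt0 => [//|r'] pr _.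
rewrite big_ord_recr /= subnn expr0 mul1r binn mulr1n.
rewrite -{2}(add0r (y ^+ r'.+1)) eqAmodDr eqAmod0.
apply: rpred_sum => i _.
have hi : (0 < (bump 0 i) < r'.+1)%N by rewrite /bump /= add1n ltnS ltn_ord.
have /dvdnP[c ->] := prime_dvd_bin pr hi.
rewrite mulnC mulrnA.
set X := _ * _.
have -> : X *+ r'.+1 *+ c = r'.+1%:R * (X *+ c).
  by rewrite mulr_natl -!mulrnA mulnC.
rewrite -[(_ %| _)%A]eqAmod0; apply: eqAmodMr0.
by apply: rpredMn; apply: rpredM; apply: rpredX.
Qed.

Lemma frob_sum r (T : finType) (A : {pred T}) (F : T -> algC) : prime r ->
  (forall i, i \in A -> F i \in Aint) ->
  ((\sum_(i in A) F i) ^+ r == \sum_(i in A) F i ^+ r %[mod r%:R])%A.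
Proof.
move=> pr AF.
suff [] : (\sum_(i in A) F i \in Aint) /\
          ((\sum_(i in A) F i) ^+ r == \sum_(i in A) F i ^+ r %[mod r%:R])%A by [].
apply: (big_rec2 (fun a b => (a \in Aint) /\ (a ^+ r == b %[mod r%:R])%A)).
  by rewrite expr0n gtn_eqF ?prime_gt0 // rpred0.
move=> i a b Ai [Aa Eab]; split; first by rewrite rpredD ?AF.
apply: eqAmod_trans (frob2 pr (AF i Ai) Aa) _.
by rewrite eqAmodDl.
Qed.

Lemma fermatA r (s : nat) : prime r -> ((s%:R : algC) ^+ r == s%:R %[mod r%:R])%A.
Proof.
by move=> pr; rewrite -natrX eqAmod_nat; apply/eqP; apply: fermat_little.
Qed.

End FrobPart.

Section CPart.
Local Open Scope ring_scope.

Lemma sum_reindexG (gT : finGroupType) (G : {group gT}) (a : gT) (F : gT -> algC) :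
  a \in G -> \sum_(u in G) F u = \sum_(u in G) F (a * u)%g.
Proof.
move=> Ga; rewrite (reindex_inj (mulgI a)) /=.
by apply: eq_bigl => u; rewrite groupMl.
Qed.

Lemma sum_lin0 (gT : finGroupType) (G : {group gT}) (phi : 'CF(G)) :
  phi \is a linear_char -> phi != 1 -> \sum_(u in G) phi u = 0.
Proof.
move=> lin nt.
have [a Ga na] : exists2 a, a \in G & phi a != 1.
  case: (pickP [pred a | (a \in G) && (phi a != 1)]) => [a /andP[Ga na] | H].
    by exists a.
  case/negP: nt; apply/eqP/cfun_inP => x Gx; rewrite cfun1E Gx.
  by move: (H x) => /= /negbT; rewrite negb_and Gx /= negbK => /eqP.
have : \sum_(u in G) phi u = phi a * \sum_(u in G) phi u.
  rewrite {1}(sum_reindexG _ Ga) big_distrr /=; apply: eq_bigr => u Gu.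
  by rewrite (lin_charM lin Ga Gu).
move/eqP; rewrite -subr_eq0 -{1}[\sum_(u in G) _]mul1r -mulrBl mulf_eq0 subr_eq0.
by rewrite eq_sym (negbTE na) => /eqP.
Qed.

Lemma NL1 r s : prime r -> (r %| s.+1)%N -> (r %| s ^ 2 + 1)%N -> ~~ odd s -> False.
Proof.
move=> pr h1 h2 ev.
have h3 : (r %| s.+1 * s.+1)%N by apply: dvdn_mulr.
have e : (s.+1 * s.+1 = (s ^ 2 + 1) + 2 * s)%N by nia.
rewrite e dvdn_addr // in h3.
have h4 : (r %| 2 * s.+1)%N by apply: dvdn_mull.
have e2 : (2 * s.+1 = 2 * s + 2)%N by lia.
rewrite e2 dvdn_addr // in h4.
have r2 : r = 2%N.
  have := dvdn_leq (isT : (0 < 2)%N) h4; have := prime_gt1 pr; lia.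
by move: h1; rewrite r2 dvdn2 /= ev.
Qed.

Lemma NL2 r s : prime r -> (r %| 2 * s)%N -> (r %| s ^ 2 + 1)%N -> ~~ odd s -> False.
Proof.
move=> pr h1 h2 ev; rewrite Euclid_dvdM // in h1; case/orP: h1 => h1.
  have r2 : r = 2%N.
    have := dvdn_leq (isT : (0 < 2)%N) h1; have := prime_gt1 pr; lia.
  move: h2; rewrite r2 dvdn2 oddD oddX /= (negbTE ev).
  by [].
have h3 : (r %| s ^ 2)%N by rewrite expnS; apply: dvdn_mulr.
rewrite dvdn_addr // dvdn1 in h2; move/eqP: h2 => r1.
by move: (prime_gt1 pr); rewrite r1.
Qed.

Lemma NL3 r s : prime r -> (r %| 2 * s)%N -> (r %| s.+1)%N -> ~~ odd s -> False.
Proof.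
move=> pr h1 h2 ev; rewrite Euclid_dvdM // in h1; case/orP: h1 => h1.
  have r2 : r = 2%N.
    have := dvdn_leq (isT : (0 < 2)%N) h1; have := prime_gt1 pr; lia.
  by move: h2; rewrite r2 dvdn2 /= ev.
rewrite -addn1 dvdn_addr // dvdn1 in h2; move/eqP: h2 => r1.
by move: (prime_gt1 pr); rewrite r1.
Qed.

Lemma congrN (r a b : nat) :
  ((a%:R : algC) == - b%:R %[mod r%:R])%A -> (r %| a + b)%N.
Proof. by rewrite -(eqAmodDr _ b%:R) addNr -natrD eqAmod0_nat. Qed.

Lemma negX (x : algC) r : odd r -> (- x) ^+ r = - x ^+ r.
Proof. by move=> o; rewrite exprNn -signr_odd o expr1 mulN1r. Qed.

Section CharPart.
Variables (P L : finType) (I : P -> L -> bool) (s : nat).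
Hypothesis hGQ : is_GQ I s.
Variables (gT : finGroupType) (G : {group gT}).
Variables (toP : {action gT &-> P}) (toL : {action gT &-> L}).
Hypothesis haut : acts_by_automorphisms G I toP toL.
Hypothesis hreg : regular_on_points G toP.
Variable x0 : P.

Local Notation D := (Dset I G toP x0).

Definition Ssum (phi : 'CF(G)) := \sum_(g in D) phi g.

Lemma DG g : g \in D -> g \in G.
Proof. by move/(subsetP (DsubG I G toP x0)). Qed.

Lemma SQ phi : phi \is a linear_char ->
  Ssum phi ^+ 2 = s.+1%:R * \sum_(u in G) phi u + (s ^ 2)%:R.
Proof.
move=> lin.
have e1 : Ssum phi = \sum_(g in D) phi g^-1%g.
  rewrite /Ssum (reindex_inj invg_inj) /=; apply: eq_bigl => g.
  by rewrite (Dsym haut).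
rewrite expr2 {1}e1 big_distrl /=.
have e2 : forall g, g \in D ->
    phi g^-1%g * Ssum phi = \sum_(u in G) (if (g * u)%g \in D then phi u else 0).
  move=> g Dg; have Gg := DG Dg.
  rewrite /Ssum big_distrr /=.
  rewrite (eq_bigl (fun h => (h \in G) && (h \in D))); last first.
    by move=> h; case: (boolP (h \in D)) => [/DG -> | ]; rewrite ?andbF.
  rewrite -big_mkcondr /= (reindex_inj (mulgI g)) /=.
  apply: eq_big => [j | j /andP[Ggj _]]; first by rewrite groupMl.
  by rewrite -lin_charM ?groupV // mulKg.
rewrite (eq_bigr _ e2) exchange_big /=.
rewrite (eq_bigr (fun u => phi u *+ (s.+1 + (u == 1)%g * s ^ 2))); last first.
  move=> u Gu; rewrite -big_mkcondr /= -(NU hGQ haut hreg x0 Gu).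
  by rewrite -sumr_const; apply: eq_bigl => g; rewrite inE.
rewrite (eq_bigr (fun u => phi u *+ s.+1 + phi u *+ ((u == 1)%g * s ^ 2))); last first.
  by move=> u _; rewrite mulrnDr.
rewrite big_split /= sumrMnl [X in _ + X](bigD1 1%g) ?group1 //= eqxx mul1n.
rewrite [X in _ + (_ + X)]big1 ?addr0 ?lin_char1 ?mulr_natl //.
by move=> u /andP[_ /negbTE ->]; rewrite mul0n mulr0n.
Qed.


Lemma Ssum1 : Ssum 1 = (s.+1 + s ^ 2)%:R.
Proof.
rewrite /Ssum (eq_bigr (fun _ => 1)); last by move=> g /DG Gg; rewrite cfun1E Gg.
have := NU hGQ haut hreg x0 (group1 G); rewrite eqxx mul1n => <-.
rewrite sumr_const; congr (_ *+ _); apply: eq_card => g; rewrite !inE mulg1.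
by case: (_ && _).
Qed.

Lemma cardG : #|G| = (s.+1 * (s ^ 2 + 1))%N.
Proof.
have := SQ (cfun1_lin_char G).
rewrite Ssum1 (eq_bigr (fun _ => 1)); last by move=> g Gg; rewrite cfun1E Gg.
rewrite sumr_const -natrX -mulr_natl.
rewrite mulr1 -natrM -natrD => /eqP; rewrite eqC_nat => /eqP h.
have h2 : (s.+1 * #|G| = s.+1 * (s.+1 * (s ^ 2 + 1)))%N by nia.
by move/eqP: h2; rewrite eqn_pmul2l // => /eqP.
Qed.

Lemma Spm phi : phi \is a linear_char -> phi != 1 ->
  Ssum phi = s%:R \/ Ssum phi = - s%:R.
Proof.
move=> lin nt; have := SQ lin; rewrite sum_lin0 // mulr0 add0r natrX => /eqP.
by rewrite eqf_sqr => /orP[] /eqP; [left | right].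
Qed.

Lemma Sfrob phi r : phi \is a linear_char -> prime r ->
  ((Ssum phi) ^+ r == Ssum (phi ^+ r) %[mod r%:R])%A.
Proof.
move=> lin pr.
have e : \sum_(g in D) (phi ^+ r) g = \sum_(g in D) phi g ^+ r.
  by apply: eq_bigr => g /DG Gg; rewrite exp_cfunE.
rewrite /Ssum e.
apply: frob_sum => // g /DG Gg.
apply: (@Aint_unity_root #[g]%g); first exact: order_gt0.
by rewrite unity_rootE lin_char_unity_root.
Qed.


Lemma Sp p lam : prime p -> (p %| s.+1)%N -> ~~ odd s -> lam \is a linear_char ->
  lam != 1 -> lam ^+ p = 1 -> Ssum lam = - s%:R.
Proof.
move=> pr ps ev lin nt lp.
case: (Spm lin nt) => // Hs; exfalso.
have F := Sfrob lin pr; rewrite Hs lp Ssum1 in F.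
have Fe := fermatA s pr; rewrite eqAmod_sym in Fe.
have := eqAmod_trans Fe F; rewrite eqAmod_nat => h.
have e : (s.+1 + s ^ 2 = s + (s ^ 2 + 1))%N by lia.
rewrite e -{1}(addn0 s) eqn_modDl mod0n eq_sym in h.
exact: (NL1 pr ps h ev).
Qed.

Lemma Sq q mu : prime q -> (q %| s ^ 2 + 1)%N -> ~~ odd s -> mu \is a linear_char ->
  mu != 1 -> mu ^+ q = 1 -> Ssum mu = s%:R.
Proof.
move=> pr qs ev lin nt lq.
have oq : odd q.
  case: (even_prime pr) => // q2; move: qs; rewrite q2 dvdn2 oddD oddX /= (negbTE ev).
  by [].
case: (Spm lin nt) => // Hs; exfalso.
have F := Sfrob lin pr; rewrite Hs lq Ssum1 negX // in F.
have Fe : (- (s%:R ^+ q) == - s%:R %[mod q%:R])%A by rewrite eqAmodN opprK fermatA.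
rewrite eqAmod_sym in Fe.
have := eqAmod_trans Fe F; rewrite eqAmod_sym => /congrN h.
have e : (s.+1 + s ^ 2 + s = s.+1 * s.+1)%N by nia.
rewrite e Euclid_dvdM // orbb in h.
exact: (NL1 pr h qs ev).
Qed.


Lemma Sfinal p q (psi : 'CF(G)) : prime p -> prime q -> (p %| s.+1)%N -> (q %| s ^ 2 + 1)%N ->
  ~~ odd s -> psi \is a linear_char ->
  psi ^+ q != 1 -> (psi ^+ q) ^+ p = 1 -> psi ^+ p != 1 -> (psi ^+ p) ^+ q = 1 ->
  psi != 1 -> False.
Proof.
move=> pp pq ps qs ev lin n1 e1 n2 e2 nt.
have A := Sp pp ps ev (rpredX q lin) n1 e1.
have B := Sq pq qs ev (rpredX p lin) n2 e2.
have op : odd p.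
  case: (even_prime pp) => // p2; move: ps; rewrite p2 dvdn2 /= ev.
  by [].
have e2s : (s + s = 2 * s)%N by lia.
case: (Spm lin nt) => Hs.
  have F := Sfrob lin pq; rewrite Hs A in F.
  have Fe := fermatA s pq; rewrite eqAmod_sym in Fe.
  have := eqAmod_trans Fe F => /congrN; rewrite e2s => h.
  exact: (NL2 pq h qs ev).
have F := Sfrob lin pp; rewrite Hs B negX // in F.
have Fe : (- (s%:R ^+ p) == - s%:R %[mod p%:R])%A by rewrite eqAmodN opprK fermatA.
rewrite eqAmod_sym in Fe.
have := eqAmod_trans Fe F; rewrite eqAmodN => /congrN; rewrite e2s => h.
exact: (NL3 pp h ps ev).
Qed.

End CharPart.

End CPart.

Unset Implicit Arguments.
Open Scope group_scope.

Theorem lemma3p8 (P L : finType) (I : P -> L -> bool) (s : nat)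
  (gT : finGroupType) (G : {group gT})
  (toP : {action gT &-> P}) (toL : {action gT &-> L}) :
  is_GQ I s -> ~~ odd s -> 4 <= s ->
  acts_by_automorphisms G I toP toL ->
  regular_on_points G toP ->
  (#|G / G^`(1)| %| 1 + s) \/ (#|G / G^`(1)| %| 1 + s ^ 2).
Proof.
move=> hGQ ev s4 haut hreg.
have [x0 _ _] : exists2 x0 : P, x0 \in [set: P] & true.
  by case: hreg => /imsetP[x0 _ _] _; exists x0.
have cG := cardG hGQ haut hreg x0.
rewrite card_quotient ?der_norm //.
set n := #|G : G^`(1)|.
have ndvd : (n %| s.+1 * (s ^ 2 + 1))%N by rewrite -cG dvdn_indexg.
rewrite !add1n; rewrite addn1 in ndvd.
case: (boolP (coprime n s.+1)) => c1.
  by right; rewrite -(Gauss_dvdr _ c1).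
case: (boolP (coprime n (s ^ 2).+1)) => c2.
  by left; rewrite -(Gauss_dvdl _ c2).
exfalso.
have [p pp [pn ps]] : exists2 p, prime p & (p %| n)%N /\ (p %| s.+1)%N.
  exists (pdiv (gcdn n s.+1)).
    apply: pdiv_prime; rewrite ltn_neqAle eq_sym c1 gcdn_gt0 orbT.
    by [].
  by split; apply: dvdn_trans (pdiv_dvd _) _; [apply: dvdn_gcdl | apply: dvdn_gcdr].
have [q pq [qn qs]] : exists2 q, prime q & (q %| n)%N /\ (q %| (s ^ 2).+1)%N.
  exists (pdiv (gcdn n (s ^ 2).+1)).
    apply: pdiv_prime; rewrite ltn_neqAle eq_sym c2 gcdn_gt0 orbT.
    by [].
  by split; apply: dvdn_trans (pdiv_dvd _) _; [apply: dvdn_gcdl | apply: dvdn_gcdr].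
rewrite -addn1 in qs.
have [linG [cF [cFinj cardL cFlin _] [cF1 cFM cFX _ _]]] := lin_char_group G.
have [u _ ou] : {u | u \in [set: linG] & #[u] = p}.
  by apply: Cauchy => //; rewrite cardsT cardL.
have [w _ ow] : {w | w \in [set: linG] & #[w] = q}.
  by apply: Cauchy => //; rewrite cardsT cardL.
have hl : forall k, (cF u ^+ k == 1)%R = (p %| k)%N.
  by move=> k; rewrite -cFX -cF1 (inj_eq cFinj) -order_dvdn ou.
have hm : forall k, (cF w ^+ k == 1)%R = (q %| k)%N.
  by move=> k; rewrite -cFX -cF1 (inj_eq cFinj) -order_dvdn ow.
have pq_ne : (p != q).
  by apply/eqP => epq; rewrite -epq in qs; exact: (NL1 pp ps qs ev).
pose psi := (cF u * cF w)%R.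
have hpsi : forall k, (psi ^+ k = cF u ^+ k * cF w ^+ k)%R by move=> k; rewrite exprMn.
have lin : psi \is a linear_char by rewrite rpredM.
have hq1 : (psi ^+ q != 1)%R.
  rewrite hpsi (eqP (_ : cF w ^+ q == 1)%R) ?hm // mulr1 hl.
  by rewrite dvdn_prime2.
have hp1 : (psi ^+ p != 1)%R.
  rewrite hpsi (eqP (_ : cF u ^+ p == 1)%R) ?hl // mul1r hm.
  by rewrite dvdn_prime2 // eq_sym.
have hqp : ((psi ^+ q) ^+ p = 1)%R.
  rewrite -exprM hpsi (eqP (_ : cF u ^+ (q * p) == 1)%R) ?hl ?dvdn_mull //.
  by rewrite (eqP (_ : cF w ^+ (q * p) == 1)%R) ?hm ?dvdn_mulr // mulr1.
have hpq : ((psi ^+ p) ^+ q = 1)%R.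
  rewrite -exprM hpsi (eqP (_ : cF u ^+ (p * q) == 1)%R) ?hl ?dvdn_mulr //.
  by rewrite (eqP (_ : cF w ^+ (p * q) == 1)%R) ?hm ?dvdn_mull // mulr1.
have nt : (psi != 1)%R by apply: contraNneq hq1 => ->; rewrite expr1n.
exact: (Sfinal hGQ haut hreg x0 pp pq ps qs ev lin hq1 hqp hp1 hpq nt).
Qed.
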